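(* In the SODA algorithm described in the context, the communication cost of a successful write operation is at most $5f^2$, i.e., $O(f^2)$.
   Context: System model: asynchronous message passing with writers $\mathcal{W}$, readers $\mathcal{R}$ and $n$ servers ordered $s_1<\dots<s_n$; reliable point-to-point channels between every client and server and every two servers; crash failures only; any number of clients and at most $f$ servers crash, $1\le f\le (n-1)/2$. Coding: values of size 1 unit; an $[n,k]$ MDS code with $k=n-f$, encoder $\Phi$ producing coded elements $\Phi_s(v)$, $s\in\mathcal{S}$, each of size $1/k$. SODA write by writer $w$ of value $v$: (get-tag phase) query all servers for their locally stored tags, wait for a majority of responses, let $t_{max}$ be the largest; (put phase) form tag $t_w=(t_{max}.z+1,w)$ and invoke md-value-send$(t_w,v)$, then wait for acknowledgments from $k$ servers. md-value-send$(t_w,v)$: the writer sends the uncoded $(t_w,v)$ to servers $s_1,\dots,s_{f+1}$ in order; each $s_i$ ($i\le f+1$), on first receipt, sends $(t_w,v)$ to $s_{i+1},\dots,s_{f+1}$, sends $(t_w,\Phi_{s'}(v))$ to every server $s'\notin\{s_1,\dots,s_{f+1}\}$, and delivers $(t_w,\Phi_{s_i}(v))$ locally; each other server delivers the coded element it receives. A server that delivers a coded element stores it if its tag exceeds the stored tag, forwards it to currently registered readers with smaller or equal requested tags (this is accounted to reads), and acknowledges to the writer. Communication cost of an operation: total size of the value/coded-element data carried in all messages sent as part of the operation, normalized by the value size; metadata (tags, ids, acknowledgments) is ignored. *)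

(* Defs.v *)
From mathcomp Require Import all_boot all_order all_algebra.
Unset Printing Implicit Defensive.
Import Order.TTheory GRing.Theory Num.Theory.

(* Abstract model of the messages sent as part of ONE write operation of SODA
   by a writer w, in a system with n servers s_1 < ... < s_n.
   - A node is [None] (the writer w) or [Some i] (server s_{i+1}, 0-indexed).
   - A payload is [None] (metadata only: tag queries, tag responses, acks),
     [Some true] (the uncoded pair (t_w, v), size 1) or
     [Some false] (a coded element (t_w, Phi_s(v)), size 1/k, k = n - f).
   A message is (sender, receiver, payload).  Since every step of the
   protocol sends a given message at most once (servers relay only on first
   receipt), the messages of an execution of the write form a SET. *)

Definition node (n : nat) := option 'I_n.
Definition payload := option bool.
Definition msg (n : nat) := (node n * node n * payload)%type.

Definition meta : payload := None.
Definition uncoded : payload := Some true.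
Definition coded : payload := Some false.

Definition write_msg_ok (n f : nat) (m : msg n) : bool :=
  match m with
  (* get-tag queries / put-phase: writer to servers *)
  | (None, Some r, None) => true
  | (None, Some r, Some true) => (r < f.+1)%N
  (* tag responses and acknowledgments: servers to writer *)
  | (Some i, None, None) => true
  (* md-value-send relays by s_{i+1}, i < f+1 *)
  | (Some i, Some r, Some true) => (i < r)%N && (r < f.+1)%N
  | (Some i, Some r, Some false) => (i < f.+1)%N && (f.+1 <= r)%N
  | _ => false
  end.

Definition write_execution (n f : nat) (M : {set msg n}) : Prop :=
  forall m, m \in M -> write_msg_ok n f m.

(* Size of the value/coded data carried by a message, normalized by the
   value size; metadata is ignored. *)
Definition payload_size (n f : nat) (p : payload) : rat :=
  match p with
  | None => 0
  | Some true => 1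
  | Some false => ((n - f)%:R)^-1
  end.

Definition comm_cost (n f : nat) (M : {set msg n}) : rat :=
  \sum_(m in M) payload_size n f (m.2).

(* Main.v *)
Require Import Defs.
From mathcomp Require Import all_boot all_order all_algebra.
From mathcomp Require Import zify.
Import Order.TTheory GRing.Theory Num.Theory.

Lemma cnt_ord (n a k : nat) :
  \sum_(r < n) ((a <= r) && (r < k) : nat) = minn n k - minn n a.
Proof.
rewrite -(big_mkord xpredT (fun r => ((a <= r) && (r < k) : nat))).
elim: n => [|n IH]; first by rewrite big_geq //; lia.
rewrite big_nat_recr //= IH.
case: (leqP a n) => ha; case: (ltnP n k) => hk /=; lia.
Qed.

Lemma cnt_ord0 (n k : nat) : \sum_(r < n) ((r < k) : nat) = minn n k.
Proof. by rewrite -[RHS]subn0 -(minn0 n) -cnt_ord. Qed.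

Local Open Scope ring_scope.

Lemma big_opt (T : finType) (F : option T -> rat) :
  \sum_(x : option T) F x = F None + \sum_(i : T) F (Some i).
Proof.
rewrite [index_enum (option T)]unlock [index_enum T]unlock.
rewrite !Finite.enum.unlock /= big_cons big_map.
by rewrite Finite.enum.unlock.
Qed.

Definition g (n f : nat) (m : msg n) : rat :=
  match m with
  | (None, Some r, Some true) => ((r < f.+1)%N : nat)%:R
  | (Some i, Some r, Some true) => (((i < r) && (r < f.+1))%N : nat)%:R
  | (Some i, Some r, Some false) =>
      (((i < f.+1) && (f.+1 <= r))%N : nat)%:R / (n - f)%:R
  | _ => 0
  end.

Lemma g_ge0 n f m : 0 <= g n f m.
Proof.
case: m => [[[i|] [r|]] [[]|]] //=; by rewrite ?divr_ge0 ?ler0n.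
Qed.

Lemma g_ok n f m : write_msg_ok n f m -> payload_size n f m.2 <= g n f m.
Proof.
case: m => [[[i|] [r|]] [[]|]] //= H; by rewrite ?H ?lexx ?mul1r.
Qed.

Lemma sum_g n f : \sum_(m : msg n) g n f m =
  \sum_(r < n) ((r < f.+1)%N : nat)%:R +
  \sum_(i < n) \sum_(r < n) ((((i < r) && (r < f.+1))%N : nat)%:R +
      (((i < f.+1) && (f.+1 <= r))%N : nat)%:R / (n - f)%:R).
Proof.
have -> : \sum_(m : msg n) g n f m = \sum_(p : node n * node n) \sum_(c : payload) g n f (p, c).
  by rewrite pair_big; apply: eq_big => // -[].
have -> : \sum_(p : node n * node n) \sum_(c : payload) g n f (p, c) =
   \sum_(a : node n) \sum_(b : node n) \sum_(c : payload) g n f (a, b, c).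
  by rewrite [RHS]pair_big; apply: eq_big => // -[].
rewrite big_opt /=.
rewrite big_opt /= big1_eq add0r.
congr (_ + _).
  by apply: eq_bigr => r _; rewrite big_opt big_bool /= add0r addr0.
apply: eq_bigr => i _; rewrite big_opt /= big1_eq add0r.
by apply: eq_bigr => r _; rewrite big_opt big_bool /= add0r.
Qed.

Theorem theorem6 (n f : nat) (hf1 : (1 <= f)%N) (hfn : (2 * f <= n - 1)%N)
  (M : {set msg n}) :
  write_execution n f M -> comm_cost n f M <= (5 * f ^ 2)%:R.
Proof.
move=> HM.
apply: (le_trans (y := \sum_(m in M) g n f m)).
  by rewrite /comm_cost; apply: ler_sum => m /HM; exact: g_ok.
apply: (le_trans (y := \sum_m g n f m)).
  rewrite [X in _ <= X](bigID (mem M)) /= lerDl sumr_ge0 // => m _.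
  exact: g_ge0.
rewrite sum_g.
under [X in _ + X <= _]eq_bigr => i _ do rewrite big_split /= -mulr_suml -!natr_sum.
rewrite big_split /= -mulr_suml -!natr_sum cnt_ord0.
have hm : minn n f.+1 = f.+1 by lia.
rewrite hm.
set Y := (\sum_(i < n) _)%N.
set Z := (\sum_(i < n) _)%N.
have hY : (Y <= f * f)%N.
  rewrite /Y.
  under eq_bigr => i _ do rewrite (cnt_ord n i.+1 f.+1) hm.
  apply: (leq_trans (n := \sum_(i < n) ((i < f)%N : nat) * f)%N).
    apply: leq_sum => i _; case: (ltnP i f) => h /=; lia.
  by rewrite -big_distrl /= cnt_ord0; apply: leq_mul => //; lia.
have hZ : (Z <= f.+1 * (n - f))%N.
  rewrite /Z.
  apply: (leq_trans (n := \sum_(i < n) ((i < f.+1)%N : nat) * (n - f))%N).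
    apply: leq_sum => i _.
    apply: (leq_trans (n := \sum_(r < n) ((i < f.+1)%N : nat) *
                          ((f.+1 <= r) && (r < n) : nat))%N).
      apply: leq_sum => r _; rewrite (ltn_ord r) andbT.
      by case: (i < f.+1)%N; case: (f.+1 <= r)%N.
    rewrite -big_distrr /= cnt_ord; apply: leq_mul => //; lia.
  by rewrite -big_distrl /= cnt_ord0; apply: leq_mul => //; lia.
have hc : (0 < (n - f)%:R :> rat) by rewrite ltr0n; lia.
have hZ' : Z%:R / (n - f)%:R <= (f.+1)%:R :> rat.
  by rewrite ler_pdivrMr // -natrM ler_nat.
apply: (le_trans (y := (f.+1 + (f * f + f.+1))%N%:R)).
  rewrite !natrD lerD2l lerD // ler_nat.
  by [].
rewrite ler_nat; nia.
Qed.
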